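(* Assume $q=p$ and let $P=[1:0:0]\in C$. The higher ramification groups in lower numbering of $P$ under the action of $G$ are $$G_{P,i}=\begin{cases}B&i\in\{-1,0\},\\ U& 1\leq i\leq p+1,\\ 1& i\geq p+2.\end{cases}$$
   Context: $p$ odd prime, $\mathbb{F}$ algebraically closed of characteristic $p$, $C$ the Drinfeld curve $XY^p-X^pY-Z^{p+1}=0$ in $\mathbb{P}^2(\mathbb{F})$, $G=SL_2(\mathbb{F}_p)$ acting by $\begin{pmatrix}\alpha&\beta\\ \gamma&\delta\end{pmatrix}\cdot[X:Y:Z]=[\alpha X+\beta Y:\gamma X+\delta Y:Z]$; $U$ = upper unitriangular matrices, $B$ = upper triangular matrices in $G$. Lower ramification groups: $G_{P,-1}=G_P$ (stabilizer) and $G_{P,i}=\{g\in G_P:\operatorname{ord}_P(g^*t-t)\geq i+1\}$ for $i\geq0$, $t$ a local parameter at $P$. *)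

(* Defs.v *)
From HB Require Import structures.
From mathcomp Require Import all_boot all_order all_algebra.
From mathcomp Require Import mpoly.
Set Implicit Arguments. Unset Strict Implicit. Unset Printing Implicit Defensive.
Import Order.TTheory GRing.Theory.
Local Open Scope ring_scope.

Section Drinfeld.
Variables (F : closedFieldType) (p : nat).

Definition vX : {mpoly F[3]} := 'X_(0 : 'I_3).
Definition vY : {mpoly F[3]} := 'X_(1 : 'I_3).
Definition vZ : {mpoly F[3]} := 'X_(2 : 'I_3).

Definition drinfeld_poly : {mpoly F[3]} :=
  vX * vY ^+ p - vX ^+ p * vY - vZ ^+ p.+1.

Definition homog_of_deg (d : nat) (A : {mpoly F[3]}) : Prop :=
  forall m, m \in msupp A -> mdeg m = d.

Definition ptP : 'I_3 -> F := fun i => if i == 0 then 1 else 0.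

(* matrix entries of g = (alpha beta; gamma delta) *)
Definition ga (g : 'M[F]_2) := g 0 0.
Definition gb (g : 'M[F]_2) := g 0 1.
Definition gc (g : 'M[F]_2) := g 1 0.
Definition gd (g : 'M[F]_2) := g 1 1.

(* G = SL_2(F_p), viewed inside 'M[F]_2 (F_p = {x | x^p = x} in F) *)
Definition inSL2p (g : 'M[F]_2) : Prop :=
  \det g = 1 /\ forall i j, g i j ^+ p = g i j.
Definition inB (g : 'M[F]_2) : Prop := inSL2p g /\ gc g = 0.
Definition inU (g : 'M[F]_2) : Prop :=
  inSL2p g /\ gc g = 0 /\ ga g = 1 /\ gd g = 1.

Definition act_pt (g : 'M[F]_2) (v : 'I_3 -> F) : 'I_3 -> F :=
  fun i => if i == 0 then ga g * v 0 + gb g * v 1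
           else if i == 1 then gc g * v 0 + gd g * v 1 else v 2.

Definition stabP (g : 'M[F]_2) : Prop :=
  exists c : F, c != 0 /\ forall i, act_pt g ptP i = c * ptP i.

Definition pullback (g : 'M[F]_2) (A : {mpoly F[3]}) : {mpoly F[3]} :=
  A \mPo [tuple ga g *: vX + gb g *: vY; gc g *: vX + gd g *: vY; vZ].

(* dehomogenization in the affine chart X = 1, with y = 'X_0, z = 'X_1 *)
Definition dehom (A : {mpoly F[3]}) : {mpoly F[2]} :=
  A \mPo [tuple 1; 'X_(0 : 'I_2); 'X_(1 : 'I_2)].

(* N/D lies in m_P^n O_{C,P}: in the local ring F[y,z]_{(y,z)}/(f) at P=(0,0),
   N/D = b/u with u(P) <> 0 and b in (y,z)^n, i.e. u N - D b is a multiple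
   of the affine equation f. *)
Definition in_mP_pow (n : nat) (N D : {mpoly F[3]}) : Prop :=
  exists u a b : {mpoly F[2]},
    u.@[fun _ => 0] != 0 /\
    u * dehom N = dehom D * b + a * dehom drinfeld_poly /\
    (forall m, m \in msupp b -> (n <= mdeg m)%N).

Definition ord_ge (n : nat) (N D : {mpoly F[3]}) : Prop := in_mP_pow n N D.

Definition local_param (A B : {mpoly F[3]}) : Prop :=
  (exists d, homog_of_deg d A /\ homog_of_deg d B) /\
  B.@[ptP] != 0 /\ ord_ge 1 A B /\ ~ ord_ge 2 A B.

(* G_{P,i} for i >= 0 with respect to t = A/B:
   g in G_P and ord_P (g^* t - t) >= i+1, where
   g^* t - t = (g^*A * B - A * g^*B) / (g^*B * B). *)
Definition ram_group (A B : {mpoly F[3]}) (i : nat) (g : 'M[F]_2) : Prop :=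
  stabP g /\
  ord_ge i.+1 (pullback g A * B - A * pullback g B) (pullback g B * B).

End Drinfeld.

(* Main.v *)
Require Import Defs.
From HB Require Import structures.
From mathcomp Require Import all_boot all_order all_algebra.
From mathcomp Require Import mpoly.
From mathcomp Require Import ring zify.
From Stdlib Require Import Lia.
Import GRing.Theory.
Local Open Scope ring_scope.

Lemma det2 (R : comNzRingType) (A : 'M[R]_2) : \det A = A 0 0 * A 1 1 - A 0 1 * A 1 0.
Proof.
rewrite (expand_det_row _ 0) big_ord_recr big_ord1 /= /cofactor !det_mx11 /=.
rewrite !mxE /= expr0 expr1 mul1r mulN1r.
have -> : widen_ord (leqnSn 1) ord0 = 0 :> 'I_2 by apply: val_inj.
have -> : lift (0 : 'I_2) 0 = 1 :> 'I_2 by apply: val_inj.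
have -> : lift (ord_max : 'I_2) 0 = 0 :> 'I_2 by apply: val_inj.
have -> : (ord_max : 'I_2) = 1 by apply: val_inj.
by rewrite mulrN.
Qed.

Lemma mpoly_ind_gen n (R : comNzRingType) (P : {mpoly R[n]} -> Prop) :
  (forall c, P c%:MP) -> (forall i, P 'X_i) ->
  (forall x y, P x -> P y -> P (x + y)) ->
  (forall x y, P x -> P y -> P (x * y)) -> forall x, P x.
Proof.
move=> HC HX HD HM; elim/mpolyind => [|c m x _ _ Hx]; first by rewrite -mpolyC0.
apply: (HD) => //; rewrite -mul_mpolyC; apply: (HM) => //.
rewrite mpolyXE_id; apply: (big_ind P); first by rewrite -mpolyC1.
  exact: HM.
move=> i _; elim: (m i) => [|k IH]; first by rewrite expr0 -mpolyC1.
by rewrite exprS; apply: HM.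
Qed.

Lemma mpoly_morph_eq n (R : comNzRingType) (S : nzRingType) (f1 f2 : {mpoly R[n]} -> S) :
  {morph f1 : x y / x + y} -> {morph f1 : x y / x * y} ->
  {morph f2 : x y / x + y} -> {morph f2 : x y / x * y} ->
  (forall c, f1 c%:MP = f2 c%:MP) -> (forall i, f1 'X_i = f2 'X_i) -> f1 =1 f2.
Proof.
move=> D1 M1 D2 M2 HC HX; apply: mpoly_ind_gen => // x y Hx Hy.
  by rewrite D1 D2 Hx Hy.
by rewrite M1 M2 Hx Hy.
Qed.

Section Main.
Variables (F : closedFieldType) (p : nat).
Definition y0 : {poly F} := - 'X^(p.+1).
Definition v2 (i : 'I_2) : {poly F} := if i == 0 then y0 else 'X.
Definition psi2 (h : {mpoly F[2]}) : {poly F} := mmap (@polyC F) v2 h.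
Definition Ev (v : 'I_3 -> {poly F}) (H : {mpoly F[3]}) : {poly F} := mmap (@polyC F) v H.
Definition vg (a b c d : F) (i : 'I_3) : {poly F} :=
  if i == 0 then a%:P + b%:P * y0 else if i == 1 then c%:P + d%:P * y0 else 'X.

Lemma psi2D : {morph psi2 : x y / x + y}. Proof. exact: rmorphD. Qed.
Lemma psi2M : {morph psi2 : x y / x * y}. Proof. exact: rmorphM. Qed.
Lemma psi2C c : psi2 c%:MP = c%:P. Proof. exact: mmapC. Qed.
Lemma psi2Z c x : psi2 (c *: x) = c%:P * psi2 x. Proof. exact: mmapZ. Qed.
Lemma psi2B : {morph psi2 : x y / x - y}. Proof. exact: rmorphB. Qed.
Lemma psi2Xn x k : psi2 (x ^+ k) = psi2 x ^+ k. Proof. exact: rmorphXn. Qed.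
Lemma psi2_1 : psi2 1 = 1. Proof. exact: rmorph1. Qed.
Lemma psi2X i : psi2 'X_i = v2 i. Proof. by rewrite /psi2 mmapX mmap1U. Qed.
Lemma EvD v : {morph Ev v : x y / x + y}. Proof. exact: rmorphD. Qed.
Lemma EvM v : {morph Ev v : x y / x * y}. Proof. exact: rmorphM. Qed.
Lemma EvC v c : Ev v c%:MP = c%:P. Proof. exact: mmapC. Qed.
Lemma EvX v i : Ev v 'X_i = v i. Proof. by rewrite /Ev mmapX mmap1U. Qed.

Lemma dehomD : {morph dehom (F:=F) : x y / x + y}. Proof. by move=> x y; rewrite /dehom rmorphD. Qed.
Lemma dehomM : {morph dehom (F:=F) : x y / x * y}. Proof. by move=> x y; rewrite /dehom rmorphM. Qed.
Lemma dehomB : {morph dehom (F:=F) : x y / x - y}. Proof. by move=> x y; rewrite /dehom rmorphB. Qed.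
Lemma pullD (g : 'M[F]_2) : {morph pullback g : x y / x + y}. Proof. by move=> x y; rewrite /pullback rmorphD. Qed.
Lemma pullM (g : 'M[F]_2) : {morph pullback g : x y / x * y}. Proof. by move=> x y; rewrite /pullback rmorphM. Qed.

Lemma psi2_pull (g : 'M[F]_2) H :
  psi2 (dehom (pullback g H)) = Ev (vg (ga g) (gb g) (gc g) (gd g)) H.
Proof.
apply: (@mpoly_morph_eq _ _ _ (fun H => psi2 (dehom (pullback g H)))) => //.
- by move=> x y; rewrite pullD dehomD psi2D.
- by move=> x y; rewrite pullM dehomM psi2M.
- exact: EvD.
- exact: EvM.
- by move=> c; rewrite /pullback /dehom !comp_mpolyC psi2C EvC.
move=> i; rewrite EvX /pullback comp_mpolyXU.
case: i => [[|[|[|//]]] Hi]; rewrite /vg /= /dehom ?rmorphD /vX /vY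
   ?comp_mpolyXU /= ?psi2D ?psi2Z ?psi2_1 ?psi2X /v2 /= ?mulr1 //.
all: rewrite !comp_mpolyZ !comp_mpolyXU /= !psi2Z !psi2_1 !psi2X /v2 /= mulr1 //.
Qed.

Lemma psi2_dehom H : psi2 (dehom H) = Ev (vg 1 0 0 1) H.
Proof.
apply: (@mpoly_morph_eq _ _ _ (fun H => psi2 (dehom H))) => //.
- by move=> x y; rewrite dehomD psi2D.
- by move=> x y; rewrite dehomM psi2M.
- exact: EvD.
- exact: EvM.
- by move=> c; rewrite /dehom !comp_mpolyC psi2C EvC.
move=> i; rewrite EvX /dehom comp_mpolyXU.
case: i => [[|[|[|//]]] Hi]; rewrite /vg /= ?psi2_1 ?psi2X /v2 /=; 
  rewrite ?mul0r ?mul1r ?add0r ?addr0 //.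
Qed.

Lemma psi2_at0 h : (psi2 h).[0] = h.@[fun _ => 0].
Proof.
apply: (@mpoly_morph_eq _ _ _ (fun h => (psi2 h).[0]) (meval (fun _ => 0))) => //.
- by move=> x y; rewrite psi2D hornerD.
- by move=> x y; rewrite psi2M hornerM.
- exact: mevalD.
- by move=> x y; rewrite /= rmorphM.
- by move=> c; rewrite psi2C hornerC mevalC.
move=> i; rewrite psi2X mevalXU /v2; case: ifP => _.
  by rewrite /y0 hornerN hornerXn expr0n oppr0.
by rewrite hornerX.
Qed.

Definition f2 : {mpoly F[2]} := 'X_0 ^+ p - 'X_0 - 'X_1 ^+ p.+1.

Lemma dehom_drinfeld : dehom (drinfeld_poly F p) = f2.
Proof.
rewrite /drinfeld_poly !dehomB !dehomM /dehom /vX /vY /vZ !rmorphXn.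
do 3 rewrite comp_mpolyXU /=.
rewrite mul1r expr1n comp_mpolyXU /f2 mul1r; congr (_ - _ ^+ _).
Qed.

Lemma psi2_f2 : psi2 f2 = y0 ^+ p.
Proof.
rewrite /f2 !psi2B !psi2Xn !psi2X /v2 /= /y0.
by rewrite opprK addrK.
Qed.

Lemma X_dvd_y0 : 'X %| y0.
Proof.
rewrite /y0 -mulN1r; apply: dvdp_mull.
by rewrite -{1}(expr1 'X); apply: dvdp_exp2l.
Qed.

Lemma Xn_dvd_psi2f2 n : (n <= p * p.+1)%N -> 'X^n %| psi2 f2.
Proof.
move=> Hn; rewrite psi2_f2 /y0 -mulN1r exprMn; apply: dvdp_mull.
by rewrite -exprM mulnC; apply: dvdp_exp2l.
Qed.

Definition hideg n (b : {mpoly F[2]}) := forall m, m \in msupp b -> (n <= mdeg m)%N.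

Lemma hideg_dvd n b : hideg n b -> 'X^n %| psi2 b.
Proof.
move=> Hb; rewrite /psi2 /mmap big_seq; apply: (big_ind (fun q => 'X^n %| q)) => [|x y|m Hm].
- exact: dvdp0.
- exact: dvdp_add.
apply: dvdp_mull; rewrite /mmap1 big_ord_recr big_ord1 /= /v2 /=.
have := Hb m Hm; rewrite mdegE big_ord_recr big_ord1 /= => Hn.
apply: (dvdp_trans (dvdp_exp2l 'X Hn)); rewrite exprD.
apply: dvdp_mul => //; apply: dvdp_exp2r; exact: X_dvd_y0.
Qed.

Lemma L_down n N D : (n <= p * p.+1)%N -> in_mP_pow p n N D -> 'X^n %| psi2 (dehom N).
Proof.
move=> Hn [u [a [b [Hu [E Hb]]]]].
have H1 : 'X^n %| psi2 u * psi2 (dehom N).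
  rewrite -psi2M E psi2D !psi2M; apply: dvdp_add; apply: dvdp_mull.
    exact: hideg_dvd.
  by rewrite dehom_drinfeld; apply: Xn_dvd_psi2f2.
rewrite Gauss_dvdpr in H1 => //; apply: coprimep_expl.
rewrite coprimep_sym -[X in coprimep _ X]subr0 -polyC0 coprimep_XsubC.
by rewrite rootE psi2_at0.
Qed.

Lemma hideg_le j k b : (j <= k)%N -> hideg k b -> hideg j b.
Proof. by move=> Hjk Hb m /Hb; apply: leq_trans. Qed.

Lemma hideg_B n x y : hideg n x -> hideg n y -> hideg n (x - y).
Proof.
move=> Hx Hy m /msuppB_le; rewrite mem_cat => /orP [/Hx|/Hy] //.
Qed.

Lemma hideg_mul j k x y : hideg j x -> hideg k y -> hideg (j + k) (x * y).
Proof.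
move=> Hx Hy m /msuppM_le /allpairsP [[m1 m2] /= [H1 H2 ->]].
by rewrite mdegD leq_add // ?Hx ?Hy.
Qed.

Lemma hideg_Ml n x y : hideg n y -> hideg n (x * y).
Proof. by move=> Hy; rewrite -[n]add0n; apply: hideg_mul. Qed.

Lemma hideg_Xn (i : 'I_2) k : hideg k ('X_i ^+ k).
Proof.
move=> m; rewrite mpolyXn msuppX inE => /eqP ->.
by rewrite mdegMn mdeg1 mul1n.
Qed.

Definition Zhat (r : {poly F}) : {mpoly F[2]} := (map_poly (mpolyC 2 (R:=F)) r).['X_1].

Lemma ZhatD : {morph Zhat : x y / x + y}.
Proof. by move=> x y; rewrite /Zhat rmorphD hornerD. Qed.
Lemma ZhatM : {morph Zhat : x y / x * y}.
Proof. by move=> x y; rewrite /Zhat rmorphM hornerM. Qed.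
Lemma ZhatC c : Zhat c%:P = c%:MP.
Proof. by rewrite /Zhat map_polyC hornerC. Qed.
Lemma ZhatX : Zhat 'X = 'X_1.
Proof. by rewrite /Zhat map_polyX hornerX. Qed.
Lemma ZhatN x : Zhat (- x) = - Zhat x.
Proof. by rewrite /Zhat rmorphN hornerN. Qed.
Lemma ZhatXn x k : Zhat (x ^+ k) = Zhat x ^+ k.
Proof. by rewrite /Zhat rmorphXn horner_exp. Qed.

Lemma Zdiff h : exists q, h - Zhat (psi2 h) = ('X_0 + 'X_1 ^+ p.+1) * q.
Proof.
elim/mpoly_ind_gen: h.
- by move=> c; exists 0; rewrite psi2C ZhatC subrr mulr0.
- case=> [[|[|//]] Hi]; rewrite psi2X /v2 /=.
    exists 1; rewrite mulr1 /y0 ZhatN ZhatXn ZhatX opprK.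
    by congr ('X_ _ + _); apply: val_inj.
  by exists 0; rewrite ZhatX mulr0; apply/eqP; rewrite subr_eq0; apply/eqP; congr 'X_ _; apply: val_inj.
- move=> x y [q1 E1] [q2 E2]; exists (q1 + q2).
  by rewrite psi2D ZhatD mulrDr -E1 -E2 opprD addrACA.
move=> x y [q1 E1] [q2 E2]; exists (q1 * y + Zhat (psi2 x) * q2).
rewrite psi2M ZhatM mulrDr mulrA -E1 mulrCA -E2.
by rewrite mulrBl mulrBr addrA subrK.
Qed.

Lemma L_up n N D : (n <= 2 * p)%N -> (2 <= p)%N ->
  (psi2 (dehom D)).[0] != 0 -> 'X^n %| psi2 (dehom N) -> in_mP_pow p n N D.
Proof.
move=> Hn Hp HD /dvdpP [r Er].
have [q Eq] := Zdiff (dehom N).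
have [k Ek] : exists k, p = k.+2 by exists p.-2; case: p Hp => [|[|]].
set w : {mpoly F[2]} := 1 - 'X_0 ^+ k.+1.
exists (w * dehom D), (- (q * dehom D)),
  (w * Zhat r * 'X_1 ^+ n - q * 'X_0 ^+ k.+1 * 'X_1 ^+ p.+1).
split; [|split].
- rewrite /w /= rmorphM rmorphB rmorph1 rmorphXn /= mevalXU expr0n subr0 mul1r.
  by rewrite -psi2_at0.
- rewrite dehom_drinfeld /f2.
  have -> : dehom N = Zhat r * 'X_1 ^+ n + ('X_0 + 'X_1 ^+ p.+1) * q.
    by rewrite -Eq Er ZhatM ZhatXn ZhatX addrC subrK.
  rewrite /w Ek; clear Eq; move: (dehom D) (Zhat r) q => a b c.
  rewrite !exprS; ring.
- rewrite -/(hideg n _); apply: hideg_B; first by apply: hideg_Ml; apply: hideg_Xn.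
  rewrite -mulrA; apply: hideg_Ml.
  apply: (@hideg_le _ (k.+1 + p.+1)%N); first by rewrite Ek; lia.
  by apply: hideg_mul; apply: hideg_Xn.
Qed.

Lemma big3 (R : Type) (idx : R) (op : Monoid.law idx) (f : 'I_3 -> R) :
  \big[op/idx]_(i < 3) f i = op (op (f 0) (f 1)) (f 2).
Proof.
rewrite !big_ord_recr big_ord0 /= Monoid.mul1m.
by congr (op (op (f _) (f _)) (f _)); apply: val_inj.
Qed.

Lemma monoE (m : 'X_{1..3}) :
  'X_[m] = vX F ^+ m (0%R : 'I_3) * vY F ^+ m (1%R : 'I_3) * vZ F ^+ m (2%R : 'I_3) :> {mpoly F[3]}.
Proof. by rewrite mpolyXE_id big3. Qed.

Lemma mdeg3 (m : 'X_{1..3}) : mdeg m = (m (0%R : 'I_3) + m (1%R : 'I_3) + m (2%R : 'I_3))%N.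
Proof. by rewrite mdegE big3. Qed.

Definition decomp d0 (H : {mpoly F[3]}) := exists c0 c1 (P Q : {mpoly F[3]}),
  H = c0%:MP * vX F ^+ d0 + c1%:MP * (vX F ^+ d0.-1 * vZ F) + vY F * P + vZ F ^+ 2 * Q
  /\ (d0 = 0%N -> c1 = 0).

Lemma decompD d0 H1 H2 : decomp d0 H1 -> decomp d0 H2 -> decomp d0 (H1 + H2).
Proof.
move=> [a0 [a1 [P1 [Q1 [E1 Z1]]]]] [b0 [b1 [P2 [Q2 [E2 Z2]]]]].
exists (a0 + b0), (a1 + b1), (P1 + P2), (Q1 + Q2); split.
  by rewrite E1 E2 !mpolyCD; ring.
by move=> H0; rewrite Z1 // Z2 // addr0.
Qed.

Lemma decomp_mono d0 c (m : 'X_{1..3}) : mdeg m = d0 -> decomp d0 (c *: 'X_[m]).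
Proof.
rewrite mdeg3 monoE -mul_mpolyC => Hd.
case Em1 : (m (1%R : 'I_3)) => [|j].
  case Em2 : (m (2%R : 'I_3)) => [|[|j]].
  - exists c, 0, 0, 0; split; last by [].
    by rewrite -Hd ?Em1 ?Em2 !addn0 expr0 mpolyC0; ring.
  - exists 0, c, 0, 0; split; last by rewrite -Hd ?Em1 ?Em2 addn1.
    by rewrite -Hd ?Em1 ?Em2 addn0 addn1 /= expr0 expr1 mpolyC0; ring.
  exists 0, 0, 0, (c%:MP * vX F ^+ m (0%R : 'I_3) * vZ F ^+ j); split; last by [].
  by rewrite ?Em1 !exprS mpolyC0; ring.
exists 0, 0, (c%:MP * vX F ^+ m (0%R : 'I_3) * vY F ^+ j * vZ F ^+ m (2%R : 'I_3)), 0; split; last by [].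
by rewrite exprS mpolyC0; ring.
Qed.

Lemma decomp_homog d0 H : homog_of_deg d0 H -> decomp d0 H.
Proof.
move=> Hh; rewrite [H]mpolyE.
have : {subset msupp H <= msupp H} by [].
elim: {-2}(msupp H) => [|m s IH] Hs.
  rewrite big_nil; exists 0, 0, 0, 0; split; last by [].
  by rewrite mpolyC0; ring.
rewrite big_cons; apply: decompD.
  by apply: decomp_mono; apply: Hh; apply: Hs; rewrite inE eqxx.
by apply: IH => x Hx; apply: Hs; rewrite inE Hx orbT.
Qed.

Lemma EvXn v x k : Ev v (x ^+ k) = Ev v x ^+ k. Proof. exact: rmorphXn. Qed.
Lemma EvB v : {morph Ev v : x y / x - y}. Proof. exact: rmorphB. Qed.

Lemma Ev_decomp v d0 c0 c1 P Q :
  Ev v (c0%:MP * vX F ^+ d0 + c1%:MP * (vX F ^+ d0.-1 * vZ F) + vY F * P + vZ F ^+ 2 * Q)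
  = c0%:P * v 0 ^+ d0 + c1%:P * v 0 ^+ d0.-1 * v 2 + v 1 * Ev v P + v 2 ^+ 2 * Ev v Q.
Proof.
by rewrite !EvD !EvM !EvC !EvXn /vX /vY /vZ !EvX mulrA.
Qed.

Lemma dvd_pow_sub K (x y : {poly F}) k : 'X^K %| x - y -> 'X^K %| x ^+ k - y ^+ k.
Proof. by move=> H; rewrite subrXX; apply: dvdp_mulr. Qed.

Lemma Ev_cong K v v' H : (forall i, 'X^K %| v i - v' i) -> 'X^K %| Ev v H - Ev v' H.
Proof.
move=> Hv; elim/mpoly_ind_gen: H.
- by move=> c; rewrite !EvC subrr dvdp0.
- by move=> i; rewrite !EvX.
- move=> x y Hx Hy; rewrite !EvD.
  have -> : Ev v x + Ev v y - (Ev v' x + Ev v' y) = (Ev v x - Ev v' x) + (Ev v y - Ev v' y) by ring.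
  exact: dvdp_add.
move=> x y Hx Hy; rewrite !EvM.
have -> : Ev v x * Ev v y - Ev v' x * Ev v' y =
  (Ev v x - Ev v' x) * Ev v y + Ev v' x * (Ev v y - Ev v' y) by ring.
by apply: dvdp_add; [apply: dvdp_mulr | apply: dvdp_mull].
Qed.

Lemma Xk_dvd_y0 K : (K <= p.+1)%N -> 'X^K %| y0.
Proof. by move=> HK; rewrite /y0 -mulN1r; apply: dvdp_mull; apply: dvdp_exp2l. Qed.

Lemma dvdp_exp_mul (K1 K2 : nat) (x y : {poly F}) :
  'X^K1 %| x -> 'X^K2 %| y -> 'X^(K1 + K2) %| x * y.
Proof. by move=> H1 H2; rewrite exprD; apply: dvdp_mul. Qed.

Lemma dvdp_Xle K1 K2 (x : {poly F}) : (K1 <= K2)%N -> 'X^K2 %| x -> 'X^K1 %| x.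
Proof. by move=> H; apply: dvdp_trans; apply: dvdp_exp2l. Qed.

Definition dexpr d0 c0 c1 (P Q : {mpoly F[3]}) :=
  c0%:MP * vX F ^+ d0 + c1%:MP * (vX F ^+ d0.-1 * vZ F) + vY F * P + vZ F ^+ 2 * Q.

Lemma vg0 a b c d : vg a b c d 0 = a%:P + b%:P * y0. Proof. by []. Qed.
Lemma vg1 a b c d : vg a b c d 1 = c%:P + d%:P * y0. Proof. by []. Qed.
Lemma vg2 a b c d : vg a b c d 2 = 'X. Proof. by []. Qed.

Lemma Ev_B (a b d : F) d0 c0 c1 P Q : (1 <= p)%N -> exists r,
  Ev (vg a b 0 d) (dexpr d0 c0 c1 P Q) =
    c0%:P * a%:P ^+ d0 + c1%:P * a%:P ^+ d0.-1 * 'X + 'X^2 * r.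
Proof.
move=> Hp; rewrite /dexpr Ev_decomp vg0 vg1 vg2.
set s := a%:P + b%:P * y0.
have Hy : 'X^2 %| y0 by apply: Xk_dvd_y0.
have Hs : 'X^2 %| s - a%:P.
  by rewrite /s addrC addKr; apply: dvdp_mull.
have : 'X^2 %| c0%:P * s ^+ d0 + c1%:P * s ^+ d0.-1 * 'X + (0%:P + d%:P * y0) * Ev (vg a b 0 d) P
    + 'X ^+ 2 * Ev (vg a b 0 d) Q - (c0%:P * a%:P ^+ d0 + c1%:P * a%:P ^+ d0.-1 * 'X).
  have -> : c0%:P * s ^+ d0 + c1%:P * s ^+ d0.-1 * 'X + (0%:P + d%:P * y0) * Ev (vg a b 0 d) P
    + 'X ^+ 2 * Ev (vg a b 0 d) Q - (c0%:P * a%:P ^+ d0 + c1%:P * a%:P ^+ d0.-1 * 'X) =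
    c0%:P * (s ^+ d0 - a%:P ^+ d0) + c1%:P * (s ^+ d0.-1 - a%:P ^+ d0.-1) * 'X
    + (0%:P + d%:P * y0) * Ev (vg a b 0 d) P + 'X ^+ 2 * Ev (vg a b 0 d) Q by ring.
  apply: dvdp_add; last exact: dvdp_mulIl.
  apply: dvdp_add; last by apply: dvdp_mulr; rewrite polyC0 add0r; apply: dvdp_mull.
  apply: dvdp_add; first by apply: dvdp_mull; apply: dvd_pow_sub.
  by apply: dvdp_mulr; apply: dvdp_mull; apply: dvd_pow_sub.
move=> /dvdpP [r Er]; exists r; rewrite -[LHS](subrK (c0%:P * a%:P ^+ d0 + c1%:P * a%:P ^+ d0.-1 * 'X)).
by rewrite Er; ring.
Qed.

Lemma binom1 (e : {poly F}) k : exists r, (1 + e) ^+ k = 1 + e * k%:R + e ^+ 2 * r.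
Proof.
elim: k => [|k [r Er]]; first by exists 0; rewrite expr0 mulr0 addr0 mulr0 addr0.
exists (k%:R + r * (1 + e)); rewrite exprS Er -natr1; ring.
Qed.

Lemma Ev_U (b : F) d0 c0 c1 P Q : (1 <= p)%N -> exists r,
  Ev (vg 1 b 0 1) (dexpr d0 c0 c1 P Q) - Ev (vg 1 0 0 1) (dexpr d0 c0 c1 P Q) =
    (b%:P * y0) * (c0%:P * d0%:R + c1%:P * (d0.-1)%:R * 'X) + 'X^(p.+1) * 'X^2 * r.
Proof.
move=> Hp; rewrite /dexpr !Ev_decomp !vg0 !vg1 !vg2.
set e := b%:P * y0.
rewrite polyC0 mul0r addr0 add0r mul1r polyC1.
have [r1 E1] := binom1 e d0; have [r2 E2] := binom1 e d0.-1.
rewrite E1 E2 !expr1n.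
have HP : 'X^(p.+1) %| Ev (vg 1 b 0 1) P - Ev (vg 1 0 0 1) P.
  apply: Ev_cong => i; rewrite /vg; case: ifP => _.
    by rewrite polyC0 mul0r addr0 addrAC subrr add0r; apply: dvdp_mull; apply: Xk_dvd_y0.
  by case: ifP => _; rewrite subrr dvdp0.
have HQ : 'X^(p.+1) %| Ev (vg 1 b 0 1) Q - Ev (vg 1 0 0 1) Q.
  apply: Ev_cong => i; rewrite /vg; case: ifP => _.
    by rewrite polyC0 mul0r addr0 addrAC subrr add0r; apply: dvdp_mull; apply: Xk_dvd_y0.
  by case: ifP => _; rewrite subrr dvdp0.
have He : 'X^(p.+1) * 'X^2 %| e ^+ 2.
  rewrite -exprD expr2; apply: (@dvdp_Xle _ (p.+1 + p.+1)); first lia.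
  by apply: dvdp_exp_mul; apply: dvdp_mull; apply: Xk_dvd_y0.
have Hy : 'X^(p.+1) %| y0 by apply: Xk_dvd_y0.
have : 'X^(p.+1) * 'X^2 %|
  c0%:P * (e ^+ 2 * r1) + c1%:P * (e ^+ 2 * r2) * 'X
  + y0 * (Ev (vg 1 b 0 1) P - Ev (vg 1 0 0 1) P)
  + 'X ^+ 2 * (Ev (vg 1 b 0 1) Q - Ev (vg 1 0 0 1) Q).
  apply: dvdp_add; last by rewrite mulrC; apply: dvdp_mul.
  apply: dvdp_add.
    apply: dvdp_add; first by apply: dvdp_mull; apply: dvdp_mulr.
    by apply: dvdp_mulr; apply: dvdp_mull; apply: dvdp_mulr.
  rewrite -exprD; apply: (@dvdp_Xle _ (p.+1 + p.+1)); first lia.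
  exact: dvdp_exp_mul.
move=> /dvdpP [r Er]; exists r; rewrite (mulrC _ r) -Er; ring.
Qed.

Lemma coef_zero j (c : F) (r : {poly F}) :
  'X^(j.+1) %| c%:P * 'X^j + 'X^(j.+1) * r -> c = 0.
Proof.
rewrite dvdp_addl; last exact: dvdp_mulr.
apply: contraTeq => Hc; apply/negP => Hd.
have Hnz : c%:P * 'X^j != 0 by rewrite mulf_eq0 negb_or polyC_eq0 Hc /= expf_neq0 // polyX_eq0.
by have := dvdp_leq Hnz Hd; rewrite size_Cmul // !size_polyXn ltnn.
Qed.

Lemma horner0_form (c : F) (r : {poly F}) : (c%:P + 'X * r).[0] = c.
Proof. by rewrite hornerD hornerC hornerM hornerX mul0r addr0. Qed.

Lemma mP_mono n m (N D : {mpoly F[3]}) : (m <= n)%N -> in_mP_pow p n N D -> in_mP_pow p m N D.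
Proof.
move=> Hmn [u [a [b [Hu [E Hb]]]]]; exists u, a, b; split => //; split => //.
by move=> x /Hb; apply: leq_trans.
Qed.

Lemma pullback_id H : pullback (1%:M : 'M[F]_2) H = H.
Proof.
apply: (@mpoly_morph_eq _ _ _ (pullback 1%:M) id) => //.
- exact: pullD.
- exact: pullM.
- by move=> c; rewrite /pullback comp_mpolyC.
move=> i; rewrite /pullback comp_mpolyXU /ga /gb /gc /gd !mxE /=.
case: i => [[|[|[|//]]] Hi] /=; rewrite ?scale1r ?scale0r ?addr0 ?add0r /vX /vY /vZ;
  by congr 'X_ _; apply: val_inj.
Qed.

Lemma mx2_eq (g h : 'M[F]_2) : g 0 0 = h 0 0 -> g 0 1 = h 0 1 ->
  g 1 0 = h 1 0 -> g 1 1 = h 1 1 -> g = h.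
Proof.
move=> H00 H01 H10 H11; apply/matrixP => i j.
have Ei : i = 0 \/ i = 1 by case: i => [[|[|//]] Hi]; [left|right]; apply: val_inj.
have Ej : j = 0 \/ j = 1 by case: j => [[|[|//]] Hj]; [left|right]; apply: val_inj.
by case: Ei => ->; case: Ej => ->.
Qed.

Lemma stab_iff (g : 'M[F]_2) : \det g = 1 -> (stabP g <-> gc g = 0).
Proof.
rewrite det2 => Hdet; split.
  case=> c [_ H]; have := H 1; rewrite /act_pt /ptP /=.
  by rewrite mulr1 mulr0 mulr0 addr0.
move=> Hc; exists (ga g); split.
  apply/eqP => Ha; move: Hdet; rewrite -/(ga g) -/(gc g) Ha Hc mul0r mulr0 subr0.
  by move/eqP; rewrite eq_sym oner_eq0.
case=> [[|[|[|//]]] Hi]; rewrite /act_pt /ptP /= ?mulr1 ?mulr0 ?addr0 ?Hc ?mul0r ?add0r //.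
Qed.

Lemma part2 (A B : {mpoly F[3]}) (Hp3 : (3 <= p)%N) (tP : local_param p A B)
  (i : nat) (g : 'M[F]_2) (Hg : inSL2p p g) :
  ram_group p A B i g <->
  (if i == 0%N then inB p g else if (i <= p.+1)%N then inU p g else g = 1%:M).
Proof.
have Hp1 : (1 <= p)%N by lia.
case: tP => [[d0 [hA hB]] [HBP [H1 H2]]].
have [c0A [c1A [PA [QA [EA ZA]]]]] := decomp_homog _ _ hA.
have [c0B [c1B [PB [QB [EB ZB]]]]] := decomp_homog _ _ hB.
have EA' : A = dexpr d0 c0A c1A PA QA by [].
have EB' : B = dexpr d0 c0B c1B PB QB by [].
have [sA EsA] := Ev_B 1 0 1 d0 c0A c1A PA QA Hp1.
have [sB EsB] := Ev_B 1 0 1 d0 c0B c1B PB QB Hp1.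
rewrite -EA' polyC1 !expr1n !mulr1 in EsA.
rewrite -EB' polyC1 !expr1n !mulr1 in EsB.
have Hc0B : c0B != 0.
  move: HBP; rewrite EB !mevalD !mevalM !mevalC !rmorphXn /= !mevalXU /ptP /=.
  by rewrite expr1n mulr1 !mulr0 !mul0r !addr0.
have Hc0A : c0A = 0.
  have Hd := L_down 1 A B (leq_trans Hp1 (leq_pmulr _ (ltn0Sn _))) H1.
  apply: (@coef_zero 0 _ (c1A%:P + 'X * sA)).
  by move: Hd; rewrite psi2_dehom EsA expr0 mulr1 expr1; congr (_ %| _); ring.
have HE1B0 : (psi2 (dehom B)).[0] != 0.
  by rewrite psi2_dehom EsB (_ : _ + _ = c0B%:P + 'X * (c1B%:P + 'X * sB)) ?horner0_form //; ring.
have Hc1A : c1A != 0.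
  apply/eqP => Hc1; apply: H2; apply: L_up => //; try lia.
  rewrite psi2_dehom EsA Hc0A Hc1 !polyC0 !mul0r !add0r.
  exact: dvdp_mulr.
have [d' Ed0] : exists d', d0 = d'.+1.
  by case: (d0) ZA => [|d'] ZA; [by move: Hc1A; rewrite ZA // eqxx | exists d'].
have Hdet := Hg.1.
have gc1 : gc (1%:M : 'M[F]_2) = 0 by rewrite /gc mxE.
have ga1 : ga (1%:M : 'M[F]_2) = 1 by rewrite /ga mxE.
have gb1 : gb (1%:M : 'M[F]_2) = 0 by rewrite /gb mxE.
have gd1 : gd (1%:M : 'M[F]_2) = 1 by rewrite /gd mxE.
rewrite /ram_group.
case: (eqVneq (gc g) 0) => Hc; last first.
  have Hns : ~ stabP g by move/(stab_iff _ Hdet); apply/eqP.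
  split; first by case.
  case: ifP => _; first by case=> _ /eqP; rewrite (negbTE Hc).
  case: ifP => _; first by case=> _ [] /eqP; rewrite (negbTE Hc).
  by move=> Eg; move: Hc; rewrite Eg gc1 eqxx.
have Hst : stabP g by apply/(stab_iff _ Hdet).
have HinB : inB p g by [].
have Had : ga g * gd g = 1 by move: Hdet; rewrite det2 -/(ga g) -/(gd g) -/(gc g) Hc mulr0 subr0.
have Ha0 : ga g != 0 by apply/eqP => Ha; move: Had; rewrite Ha mul0r => /eqP; rewrite eq_sym oner_eq0.
have Ppull : forall H, psi2 (dehom (pullback g H)) = Ev (vg (ga g) (gb g) 0 (gd g)) H.
  by move=> H; rewrite psi2_pull Hc.
set N := pullback g A * B - A * pullback g B.
set D := pullback g B * B.
have PsiN : psi2 (dehom N) = Ev (vg (ga g) (gb g) 0 (gd g)) A * Ev (vg 1 0 0 1) B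
   - Ev (vg 1 0 0 1) A * Ev (vg (ga g) (gb g) 0 (gd g)) B.
  by rewrite /N dehomB !dehomM psi2B !psi2M !Ppull !psi2_dehom.
have [rA ErA] := Ev_B (ga g) (gb g) (gd g) d0 c0A c1A PA QA Hp1.
have [rB ErB] := Ev_B (ga g) (gb g) (gd g) d0 c0B c1B PB QB Hp1.
rewrite -EA' in ErA; rewrite -EB' in ErB.
have HD0 : (psi2 (dehom D)).[0] != 0.
  rewrite /D dehomM psi2M Ppull psi2_dehom hornerM ErB EsB !hornerE.
  by rewrite expr0n /= !mul0r !addr0 !mulf_neq0 // expf_neq0.
have Hp2 : (p.+3 <= p * p.+1)%N by nia.
case: (eqVneq (ga g) 1) => Ha1; last first.
  (* B \ U case *)
  set a := ga g.
  have Hform : psi2 (dehom N) = (c1A * c0B * (a ^+ d' - a ^+ d'.+1))%:P * 'X^1 + 'X^2 *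
    (c1A%:P * a%:P ^+ d' * (c1B%:P + 'X * sB) + rA * (c0B%:P + c1B%:P * 'X + 'X^2 * sB)
     - c1A%:P * (c1B%:P * a%:P ^+ d' + 'X * rB)
     - sA * (c0B%:P * a%:P ^+ d'.+1 + c1B%:P * a%:P ^+ d' * 'X + 'X^2 * rB)).
    rewrite PsiN ErA ErB EsA EsB Hc0A Ed0 /= !polyCM polyCB !polyC_exp polyC0.
    rewrite !exprS; ring.
  have Hk : c1A * c0B * (a ^+ d' - a ^+ d'.+1) != 0.
    rewrite !mulf_neq0 // exprS -{1}(mul1r (a ^+ d')) -mulrBl mulf_neq0 ?expf_neq0 //.
    by rewrite subr_eq0 eq_sym.
  have Hup : ord_ge p 1 N D.
    apply: L_up => //; try lia.
    rewrite Hform; apply: dvdp_add; first exact: dvdp_mull.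
    by apply: dvdp_mulr; apply: dvdp_exp2l.
  have Hnot : ~ ord_ge p 2 N D.
    move=> Ho; have := L_down 2 N D (leq_trans _ Hp2) Ho; rewrite Hform => /(_ isT) Hd.
    by move/eqP: Hk; apply; apply: (@coef_zero 1 _ _ Hd).
  split.
    case=> _ Ho; case: ifP => Hi0 //.
    by exfalso; apply: Hnot; apply: (mP_mono _ _ _ _ _ Ho); move: Hi0 => /eqP; lia.
  move=> HR; split => //; move: HR; case: ifP => [/eqP -> //|Hi0].
  case: ifP => _; first by case=> _ [_ [Ha _]]; move: Ha1; rewrite /a Ha eqxx.
  by move=> Eg; move: Ha1; rewrite /a Eg ga1 eqxx.
have Hd1 : gd g = 1 by move: Had; rewrite Ha1 mul1r.
case: (eqVneq (gb g) 0) => Hb0.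
  have Eg : g = 1%:M.
    apply: mx2_eq; rewrite !mxE /=.
    - exact: Ha1.
    - exact: Hb0.
    - exact: Hc.
    - exact: Hd1.
  have N0 : N = 0 by rewrite /N Eg !pullback_id subrr.
  have HL : stabP g /\ ord_ge p i.+1 N D.
    split => //; rewrite N0; exists 1, 0, 0; split; first by rewrite meval1 oner_eq0.
    split; first by rewrite /dehom comp_mpoly0 !mulr0 mul0r addr0.
    by move=> m; rewrite -mpolyC0 msupp0.
  have HR : if i == 0%N then inB p g else if (i <= p.+1)%N then inU p g else g = 1%:M.
    by case: ifP => _ //; case: ifP => _ //.
  by split.
(* U case *)
rewrite Ha1 Hd1 in PsiN Ppull.
have [uA EuA] := Ev_U (gb g) d0 c0A c1A PA QA Hp1.
have [uB EuB] := Ev_U (gb g) d0 c0B c1B PB QB Hp1.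
rewrite -EA' in EuA; rewrite -EB' in EuB.
set b := gb g.
have Hform : psi2 (dehom N) = (b * c1A * c0B)%:P * 'X^(p.+2) + 'X^(p.+3) *
  (- b%:P * c1A%:P * d'%:R * (c1B%:P + 'X * sB) + uA * (c0B%:P + c1B%:P * 'X + 'X^2 * sB)
   + b%:P * c1A%:P * c1B%:P * d'%:R - c1A%:P * 'X * uB
   - sA * (- b%:P * (c0B%:P * (d'%:R + 1) + c1B%:P * d'%:R * 'X) + 'X^2 * uB)).
  have EgA : Ev (vg 1 b 0 1) A = Ev (vg 1 0 0 1) A + (Ev (vg 1 b 0 1) A - Ev (vg 1 0 0 1) A).
    by rewrite addrC subrK.
  have EgB : Ev (vg 1 b 0 1) B = Ev (vg 1 0 0 1) B + (Ev (vg 1 b 0 1) B - Ev (vg 1 0 0 1) B).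
    by rewrite addrC subrK.
  rewrite PsiN EgA EgB EuA EuB EsA EsB Hc0A Ed0 /= -natr1 !polyCM polyC0 /y0.
  rewrite !exprS; ring.
have Hk : b * c1A * c0B != 0 by rewrite !mulf_neq0.
have Hup : forall n, (n <= p.+2)%N -> ord_ge p n N D.
  move=> n Hn; apply: L_up => //; try lia.
  apply: (dvdp_Xle _ _ _ Hn); rewrite Hform; apply: dvdp_add; first exact: dvdp_mull.
  by apply: dvdp_mulr; apply: dvdp_exp2l.
have Hnot : ~ ord_ge p p.+3 N D.
  move=> Ho; have := L_down _ N D Hp2 Ho; rewrite Hform => Hd.
  by move/eqP: Hk; apply; apply: (@coef_zero p.+2 _ _ Hd).
split.
  case=> _ Ho; case: ifP => Hi0 //; case: ifP => Hi.
    by split => //; split => //; split.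
  by exfalso; apply: Hnot; apply: (mP_mono _ _ _ _ _ Ho); move: Hi; lia.
move=> HR; split => //; apply: Hup; move: HR; case: ifP => [/eqP -> //|Hi0].
case: ifP => Hi; first by move=> _; lia.
by move=> Eg; move: Hb0; rewrite /b Eg gb1 eqxx.
Qed.
End Main.

Theorem mainTheorem8 (p : nat) (F : closedFieldType)
  (p_prime : prime p) (p_odd : odd p) (charF : p \in [pchar F])
  (A B : {mpoly F[3]}) (tP : local_param p A B) :
  (forall g : 'M[F]_2, inSL2p p g -> (stabP g <-> inB p g)) /\
  (forall (i : nat) (g : 'M[F]_2), inSL2p p g ->
     (ram_group p A B i g <->
        if i == 0%N then inB p g
        else if (i <= p.+1)%N then inU p g
        else g = 1%:M)).
Proof.
have Hp3 : (3 <= p)%N.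
  move: (prime_gt1 p_prime) p_odd; case: (p) => [|[|[|q]]] //.
split.
  move=> g Hg; rewrite (stab_iff F g Hg.1); split; first by move=> Hc; split.
  by case.
by move=> i g Hg; apply: part2.
Qed.
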